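(* Let $m,d,n\ge1$, $p,q,\lambda>0$, $g(\alpha)=\|\alpha/\lambda\|_p^q$, and let $\mathfrak{D}$ be the set of matrices $D\in\mathbb{R}^{m\times d}$ whose columns all have unit $\ell_2$-norm. For any $X=[x_1,\dots,x_n]\in\mathbb{R}^{m\times n}$ define $$F_X(D)=\frac1n\sum_{i=1}^n\inf_{\alpha\in\mathbb{R}^d}\Big(\tfrac12\|x_i-D\alpha\|_2^2+g(\alpha)\Big),\qquad L_X=\frac1n\sum_{i=1}^n\|x_i\|_2\cdot\lambda\cdot d^{(1-1/p)_+}\Big(\tfrac12\|x_i\|_2^2\Big)^{1/q}.$$ Then for any $X$ and any $D,D'\in\mathfrak{D}$, $$|F_X(D')-F_X(D)|\le L_X\,\|D'-D\|_{1\to2}.$$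
   Context: $(t)_+=\max\{t,0\}$. For a matrix $M$ with columns $m_i$, $\|M\|_{1\to2}=\max_i\|m_i\|_2$. For $0<p<1$, $\|\cdot\|_p$ is the $\ell_p$ quasi-norm. *)

(* Defs.v *)
From HB Require Import structures.
From mathcomp Require Import all_boot all_order all_algebra.
From mathcomp Require Import all_classical all_reals all_analysis.
Set Implicit Arguments. Unset Strict Implicit. Unset Printing Implicit Defensive.
Import Order.TTheory GRing.Theory Num.Theory.
Local Open Scope ring_scope.
Local Open Scope classical_set_scope.

Definition norm2 (R : realType) (k : nat) (v : 'cV[R]_k) : R :=
  Num.sqrt (\sum_(i < k) v i 0 ^+ 2).

Definition lpnorm (R : realType) (k : nat) (p : R) (v : 'cV[R]_k) : R :=
  (\sum_(i < k) `|v i 0| `^ p) `^ p^-1.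

Definition greg (R : realType) (d : nat) (p q lam : R) (a : 'cV[R]_d) : R :=
  (lpnorm p (lam^-1 *: a)) `^ q.

(* ||M||_{1->2} = max column l2 norm *)
Definition norm12 (R : realType) (m d : nat) (M : 'M[R]_(m, d)) : R :=
  \big[Num.max/0]_(j < d) norm2 (col j M).

Definition unit_cols (R : realType) (m d : nat) (D : 'M[R]_(m, d)) : Prop :=
  forall j : 'I_d, norm2 (col j D) = 1.

Definition FX (R : realType) (m d n : nat) (p q lam : R)
    (X : 'M[R]_(m, n)) (D : 'M[R]_(m, d)) : R :=
  n%:R^-1 * \sum_(i < n)
    inf [set (2^-1 * norm2 (col i X - D *m a) ^+ 2 + greg p q lam a)
        | a in [set: 'cV[R]_d]].

Definition LX (R : realType) (m n : nat) (d : nat) (p q lam : R)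
    (X : 'M[R]_(m, n)) : R :=
  n%:R^-1 * \sum_(i < n)
    (norm2 (col i X) * lam * (d%:R `^ Num.max (1 - p^-1) 0)
       * ((2^-1 * norm2 (col i X) ^+ 2) `^ q^-1)).

(* Main.v *)
Require Import Defs.
From HB Require Import structures.
From mathcomp Require Import all_boot all_order all_algebra.
From mathcomp Require Import all_classical all_reals all_analysis.
From mathcomp Require Import lra ring.
Import Order.TTheory GRing.Theory Num.Theory.
Set Implicit Arguments. Unset Strict Implicit.
Local Open Scope ring_scope.

Section Aux.
Variable R : realType.

Lemma ssq_ge0 k (v : 'cV[R]_k) : 0 <= \sum_(i < k) v i 0 ^+ 2.
Proof. by apply: sumr_ge0 => i _; exact: sqr_ge0. Qed.

Lemma norm2_ge0 k (v : 'cV[R]_k) : 0 <= norm2 v.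
Proof. exact: sqrtr_ge0. Qed.

Lemma norm2_sq k (v : 'cV[R]_k) : norm2 v ^+ 2 = \sum_(i < k) v i 0 ^+ 2.
Proof. by rewrite /norm2 sqr_sqrtr // ssq_ge0. Qed.

Lemma norm2_le k (v : 'cV[R]_k) c : 0 <= c ->
  \sum_(i < k) v i 0 ^+ 2 <= c ^+ 2 -> norm2 v <= c.
Proof.
move=> c0 h; rewrite -(@ler_pXn2r _ 2) ?nnegrE ?norm2_ge0 //.
by rewrite norm2_sq.
Qed.

Lemma norm2_eq0 k (v : 'cV[R]_k) i : norm2 v = 0 -> v i 0 = 0.
Proof.
move=> h; have h2 : \sum_(i < k) v i 0 ^+ 2 = 0 by rewrite -norm2_sq h expr0n.
have := psumr_eq0P (fun i _ => sqr_ge0 (v i 0)) h2 (i:=i) isT.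
by move/eqP; rewrite sqrf_eq0 => /eqP.
Qed.

Lemma cs k (u v : 'cV[R]_k) :
  \sum_(i < k) u i 0 * v i 0 <= norm2 u * norm2 v.
Proof.
have [a0|a0] := eqVneq (norm2 u) 0.
  rewrite a0 mul0r big1 // => i _; by rewrite (norm2_eq0 i a0) mul0r.
have [b0|b0] := eqVneq (norm2 v) 0.
  rewrite b0 mulr0 big1 // => i _; by rewrite (norm2_eq0 i b0) mulr0.
have ha : 0 < norm2 u by rewrite lt0r a0 norm2_ge0.
have hb : 0 < norm2 v by rewrite lt0r b0 norm2_ge0.
set a := norm2 u in ha a0 *; set b := norm2 v in hb b0 *.
have key : (2 * a * b) * \sum_(i < k) u i 0 * v i 0 <= (2 * a * b) * (a * b).
  rewrite mulr_sumr.
  apply: (@le_trans _ _ (\sum_(i < k) (b ^+ 2 * u i 0 ^+ 2 + a ^+ 2 * v i 0 ^+ 2))).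
    apply: ler_sum => i _; have := sqr_ge0 (b * u i 0 - a * v i 0); nra.
  rewrite big_split /= -!mulr_sumr -!norm2_sq -/a -/b; lra.
by rewrite ler_pM2l // in key; rewrite !mulr_gt0.
Qed.

Lemma norm2D k (u v : 'cV[R]_k) : norm2 (u + v) <= norm2 u + norm2 v.
Proof.
apply: norm2_le; first by rewrite addr_ge0 ?norm2_ge0.
have -> : \sum_(i < k) (u + v) i 0 ^+ 2 =
  \sum_(i < k) u i 0 ^+ 2 + 2 * \sum_(i < k) u i 0 * v i 0 + \sum_(i < k) v i 0 ^+ 2.
  rewrite mulr_sumr -!big_split /=; apply: eq_bigr => i _; rewrite !mxE; ring.
rewrite -!norm2_sq; have := cs u v; nra.
Qed.

Lemma norm2Z k (t : R) (v : 'cV[R]_k) : norm2 (t *: v) = `|t| * norm2 v.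
Proof.
rewrite /norm2 -sqrtr_sqr -sqrtrM ?sqr_ge0 //; congr Num.sqrt.
by rewrite mulr_sumr; apply: eq_bigr => i _; rewrite !mxE exprMn.
Qed.

Lemma norm2N k (v : 'cV[R]_k) : norm2 (- v) = norm2 v.
Proof. by rewrite -scaleN1r norm2Z normrN normr1 mul1r. Qed.

Lemma norm2B k (u v : 'cV[R]_k) : norm2 (u - v) <= norm2 u + norm2 v.
Proof. by rewrite -(norm2N v) norm2D. Qed.

Lemma norm2_sum k d (w : 'I_d -> 'cV[R]_k) :
  norm2 (\sum_(j < d) w j) <= \sum_(j < d) norm2 (w j).
Proof.
apply: (big_ind2 (fun x y => norm2 x <= y)).
- by apply: norm2_le => //; rewrite big1 ?expr0n // => i _; rewrite mxE expr0n.
- by move=> x1 x2 y1 y2 h1 h2; apply: le_trans (norm2D _ _) (lerD h1 h2).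
- by [].
Qed.

Lemma norm12_ge0 m d (M : 'M[R]_(m, d)) : 0 <= norm12 M.
Proof.
apply: (big_ind (fun x => 0 <= x)) => //; last by move=> j _; exact: norm2_ge0.
by move=> x y hx hy; rewrite le_max hx.
Qed.

Lemma norm2_col_le m d (M : 'M[R]_(m, d)) j : norm2 (col j M) <= norm12 M.
Proof. exact: (le_bigmax 0 (fun j => norm2 (col j M)) j). Qed.

Lemma norm12Z m d (t : R) (M : 'M[R]_(m, d)) : 0 <= t ->
  norm12 (t *: M) <= t * norm12 M.
Proof.
move=> t0; apply: bigmax_le; first by rewrite mulr_ge0 ?norm12_ge0.
move=> j _; have -> : col j (t *: M) = t *: col j M.
  by apply/matrixP => i k; rewrite !mxE.
by rewrite norm2Z ger0_norm // ler_wpM2l // norm2_col_le.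
Qed.

Lemma norm12N m d (M : 'M[R]_(m, d)) : norm12 (- M) = norm12 M.
Proof.
apply: eq_bigr => j _; have -> : col j (- M) = - col j M.
  by apply/matrixP => i k; rewrite !mxE.
by rewrite norm2N.
Qed.

Lemma norm2_mul m d (M : 'M[R]_(m, d)) (a : 'cV[R]_d) :
  norm2 (M *m a) <= norm12 M * \sum_(j < d) `|a j 0|.
Proof.
have -> : M *m a = \sum_(j < d) a j 0 *: col j M.
  apply/matrixP => i k; rewrite !mxE summxE; apply: eq_bigr => j _.
  by rewrite !mxE (ord1 k) mulrC.
apply: le_trans (norm2_sum _) _; rewrite mulr_sumr; apply: ler_sum => j _.
by rewrite norm2Z mulrC ler_wpM2r // norm2_col_le.
Qed.

End Aux.

Section Aux2.
Variable R : realType.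

Lemma powRV (x r : R) : 0 < x -> (x^-1) `^ r = (x `^ r)^-1.
Proof.
move=> x0; rewrite -powR_inv1 ?ltW // -powRrM mulN1r powRN //.
Qed.

Lemma young1 (t p : R) : 0 <= t -> 1 <= p -> t <= t `^ p / p + (1 - p^-1).
Proof.
move=> t0 p1; have [->|pn1] := eqVneq p 1.
  by rewrite powRr1 // invr1 mulr1 subrr addr0.
have p1' : 1 < p by rewrite lt_neqAle eq_sym pn1.
have p0 : 0 < p by apply: lt_trans p1'.
have hi : p^-1 < 1 by rewrite invf_lt1.
have r0 : 0 < (1 - p^-1)^-1 by rewrite invr_gt0 subr_gt0.
have := @conjugate_powR R t 1 p (1 - p^-1)^-1 t0 ler01 p0 r0.
move=> h; have e : (1 - p^-1)^-1^-1 = 1 - p^-1 by exact: invrK.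
rewrite e in h; rewrite mulr1 powR1 mul1r in h; apply: h; ring.
Qed.

Lemma l1lp d (b : 'I_d -> R) (p : R) : (1 <= d)%N -> 0 < p ->
  (forall j, 0 <= b j) ->
  \sum_(j < d) b j <= d%:R `^ Num.max (1 - p^-1) 0 * (\sum_(j < d) b j `^ p) `^ p^-1.
Proof.
move=> d1 p0 b0.
set T := \sum_(j < d) b j `^ p; set S := T `^ p^-1.
have T0 : 0 <= T by apply: sumr_ge0 => j _; exact: powR_ge0.
have S0 : 0 <= S by exact: powR_ge0.
have SpT : S `^ p = T by rewrite /S -powRrM mulVf ?gt_eqF // powRr1.
have bS : forall j, b j <= S.
  move=> j; have -> : b j = (b j `^ p) `^ p^-1 by rewrite -powRrM mulfV ?gt_eqF // powRr1.
  apply: ge0_ler_powR; first by rewrite invr_ge0 ltW.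
  - by rewrite nnegrE powR_ge0.
  - by rewrite nnegrE.
  rewrite /T (bigD1 j) //= lerDl; apply: sumr_ge0 => i _; exact: powR_ge0.
have [S00|Spos] := eqVneq S 0.
  rewrite big1; first by rewrite mulr_ge0 ?powR_ge0.
  by move=> j _; apply/eqP; rewrite eq_le b0 andbT -S00 bS.
have Sgt0 : 0 < S by rewrite lt0r Spos S0.
have Tgt0 : 0 < T by rewrite -SpT powR_gt0.
have frac : forall c, 0 < c -> \sum_(j < d) (b j * c) `^ p = T * c `^ p.
  move=> c c0; rewrite /T mulr_suml; apply: eq_bigr => j _.
  by rewrite powRM ?b0 ?ltW.
have [p1|p1] := leP p 1.
  have -> : Num.max (1 - p^-1) 0 = 0.
    apply/max_idPr; rewrite subr_le0 invf_ge1 //.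
  rewrite powRr0 mul1r.
  have h : \sum_(j < d) (b j * S^-1) <= 1.
    apply: (@le_trans _ _ (\sum_(j < d) (b j * S^-1) `^ p)).
      apply: ler_sum => j _.
      have [bj0|bj0] := eqVneq (b j) 0; first by rewrite bj0 mul0r powR_ge0.
      apply: ger1_powR => //; apply/andP; split.
        by rewrite mulr_gt0 ?invr_gt0 // lt0r bj0 b0.
      by rewrite ler_pdivrMr // mul1r bS.
    by rewrite frac ?invr_gt0 // powRV // SpT mulfV ?gt_eqF.
  by rewrite -mulr_suml ler_pdivrMr // mul1r in h.
have p1' : 1 <= p by apply: ltW.
have -> : Num.max (1 - p^-1) 0 = 1 - p^-1.
  by apply/max_idPl; rewrite subr_ge0 invf_le1 // ltW.
have d0 : 0 < d%:R :> R by rewrite ltr0n.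
set K := d%:R `^ p^-1 : R.
have K0 : 0 < K by rewrite powR_gt0.
have KpD : K `^ p = d%:R by rewrite /K -powRrM mulVf ?gt_eqF // powRr1 // ltW.
set c := K / S.
have c0 : 0 < c by rewrite divr_gt0.
have h : \sum_(j < d) b j * c <= d%:R.
  apply: (@le_trans _ _ (\sum_(j < d) ((b j * c) `^ p / p + (1 - p^-1)))).
    by apply: ler_sum => j _; apply: young1 => //; rewrite mulr_ge0 ?b0 ?ltW.
  rewrite big_split /= -mulr_suml frac // sumr_const card_ord.
  have cp : c `^ p = d%:R / T.
    by rewrite /c powRM ?invr_ge0 ?(ltW K0) ?(ltW Sgt0) // powRV // KpD SpT.
  rewrite cp mulrCA mulfV ?gt_eqF // mulr1 -mulr_natr.
  by rewrite le_eqVlt; apply/orP; left; apply/eqP; ring.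
rewrite powRB ?(gt_eqF d0) ?implybT // powRr1 ?(ltW d0) // -/K.
rewrite -mulr_suml in h.
have -> : \sum_(j < d) b j = ((\sum_(j < d) b j) * c) * (S / K).
  by rewrite /c; field; rewrite (gt_eqF Sgt0) (gt_eqF K0).
by rewrite (mulrAC _ _ S) -(mulrA _ S) ler_wpM2r // divr_ge0 // ltW.
Qed.

End Aux2.

Section Aux3.
Local Open Scope classical_set_scope.
Variable R : realType.
Variables (m d : nat) (p q lam : R).
Hypotheses (hd : (1 <= d)%N) (hp : 0 < p) (hq : 0 < q) (hlam : 0 < lam).

Lemma greg_ge0 (a : 'cV[R]_d) : 0 <= greg p q lam a.
Proof. exact: powR_ge0. Qed.

Lemma greg0 : greg p q lam (0 : 'cV[R]_d) = 0.
Proof.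
rewrite /greg /lpnorm scaler0 big1 => [|i _].
  by rewrite powR0 ?invr_eq0 ?gt_eqF // powR0 // gt_eqF.
by rewrite mxE normr0 powR0 // gt_eqF.
Qed.

Definition dpow : R := d%:R `^ Num.max (1 - p^-1) 0.

Lemma greg_bound (a : 'cV[R]_d) s : greg p q lam a <= s ->
  \sum_(j < d) `|a j 0| <= lam * dpow * s `^ q^-1.
Proof.
move=> hs.
set b := lam^-1 *: a.
have ha : \sum_(j < d) `|a j 0| = lam * \sum_(j < d) `|b j 0|.
  rewrite mulr_sumr; apply: eq_bigr => j _.
  by rewrite /b mxE normrM gtr0_norm ?invr_gt0 // mulrA mulfV ?gt_eqF // mul1r.
set S := lpnorm p b.
have S0 : 0 <= S by exact: powR_ge0.
have Ss : S <= s `^ q^-1.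
  have -> : S = (S `^ q) `^ q^-1 by rewrite -powRrM mulfV ?gt_eqF // powRr1.
  apply: ge0_ler_powR; first by rewrite invr_ge0 ltW.
  - by rewrite nnegrE powR_ge0.
  - by rewrite nnegrE (le_trans (greg_ge0 a)).
  - exact: hs.
rewrite ha -mulrA ler_wpM2l ?(ltW hlam) //.
have := @l1lp R d (fun j => `|b j 0|) p hd hp (fun j => normr_ge0 _).
move=> /le_trans; apply.
by rewrite ler_wpM2l // powR_ge0.
Qed.


Definition hh (x : 'cV[R]_m) (D : 'M[R]_(m, d)) (a : 'cV[R]_d) :=
  2^-1 * norm2 (x - D *m a) ^+ 2 + greg p q lam a.

Definition fcol (x : 'cV[R]_m) (D : 'M[R]_(m, d)) :=
  inf [set (2^-1 * norm2 (x - D *m a) ^+ 2 + greg p q lam a)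
        | a in [set: 'cV[R]_d]].

Lemma hh_ge0 x D a : 0 <= hh x D a.
Proof. by rewrite addr_ge0 ?greg_ge0 // mulr_ge0 ?sqr_ge0 // invr_ge0. Qed.

Lemma fcol_le x D a : fcol x D <= hh x D a.
Proof.
apply: ge_inf; last by exists a.
by exists 0 => y [b _ <-]; exact: hh_ge0.
Qed.

Lemma hh0 x D : hh x D 0 = 2^-1 * norm2 x ^+ 2.
Proof. by rewrite /hh mulmx0 subr0 greg0 addr0. Qed.

Lemma dpow_ge0 : 0 <= dpow. Proof. exact: powR_ge0. Qed.

Definition cc (x : 'cV[R]_m) := lam * dpow * (2^-1 * norm2 x ^+ 2) `^ q^-1.
Definition AA (x : 'cV[R]_m) :=
  norm2 x * lam * dpow * (2^-1 * norm2 x ^+ 2) `^ q^-1.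

Lemma cc_ge0 x : 0 <= cc x.
Proof. by rewrite /cc !mulr_ge0 ?powR_ge0 ?dpow_ge0 ?(ltW hlam). Qed.

Lemma AA_ge0 x : 0 <= AA x.
Proof. by rewrite /AA !mulr_ge0 ?powR_ge0 ?dpow_ge0 ?norm2_ge0 ?(ltW hlam). Qed.

Lemma fcol_quad x D E : fcol x E - fcol x D <=
  AA x * norm12 (E - D) + 2^-1 * cc x ^+ 2 * norm12 (E - D) ^+ 2.
Proof.
set N := norm12 (E - D).
have N0 : 0 <= N by exact: norm12_ge0.
have c0 := cc_ge0 x.
have hA : AA x = norm2 x * cc x by rewrite /AA /cc !mulrA.
have X0 := norm2_ge0 x.
rewrite hA.
set c := cc x in c0 *; set X := norm2 x in X0 *.
suff : fcol x E - (X * c * N + 2^-1 * c ^+ 2 * N ^+ 2) <= fcol x D.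
  by move=> h; lra.
apply: lb_le_inf; first by exists (hh x D 0); exists 0.
move=> y [a _ <-]; rewrite -/(hh x D a).
have [big|small] := leP (2^-1 * X ^+ 2) (hh x D a).
  have := fcol_le x E 0; rewrite hh0 -/X => h.
  have : 0 <= X * c * N + 2^-1 * c ^+ 2 * N ^+ 2.
    have h2 : (0:R) <= 2^-1 by rewrite invr_ge0 ler0n.
    apply: addr_ge0; first by apply: mulr_ge0 => //; apply: mulr_ge0.
    by apply: mulr_ge0; [apply: mulr_ge0 => //; exact: sqr_ge0 | exact: sqr_ge0].
  lra.
have gD := greg_ge0 a.
have sD := sqr_ge0 (norm2 (x - D *m a)).
have hg : greg p q lam a <= 2^-1 * X ^+ 2 by move: small; rewrite /hh; lra.
have nD0 := norm2_ge0 (x - D *m a).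
have hn : norm2 (x - D *m a) <= X.
  move: small; rewrite /hh => small.
  rewrite -(@ler_pXn2r _ 2) ?nnegrE //; lra.
have hb : \sum_(j < d) `|a j 0| <= c by exact: greg_bound hg.
have hbb : norm2 ((E - D) *m a) <= N * c.
  by apply: le_trans (norm2_mul _ _) _; rewrite ler_wpM2l.
have he : norm2 (x - E *m a) <= norm2 (x - D *m a) + norm2 ((E - D) *m a).
  have -> : x - E *m a = (x - D *m a) - (E - D) *m a.
    by rewrite mulmxBl opprB addrA subrK.
  exact: norm2B.
have := fcol_le x E a; rewrite /hh.
have bb0 := norm2_ge0 ((E - D) *m a).
have nE0 := norm2_ge0 (x - E *m a).
set nE := norm2 (x - E *m a) in he nE0 *.
set nD := norm2 (x - D *m a) in he hn nD0 sD *.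
set bb := norm2 ((E - D) *m a) in he hbb bb0 *.
have s1 : nE ^+ 2 <= (nD + bb) ^+ 2.
  by rewrite (@ler_pXn2r _ 2) ?nnegrE // addr_ge0.
have s2 : nD * bb <= X * (N * c) by apply: ler_pM.
have s3 : bb ^+ 2 <= (N * c) ^+ 2.
  by rewrite (@ler_pXn2r _ 2) ?nnegrE // mulr_ge0.
have e3 : (N * c) ^+ 2 = c ^+ 2 * N ^+ 2 by ring.
have e1 : (nD + bb) ^+ 2 = nD ^+ 2 + 2 * (nD * bb) + bb ^+ 2 by ring.
have e2 : X * (N * c) = X * c * N by ring.
move=> h; lra.
Qed.

End Aux3.

Lemma lipq (R : realType) m d (phi : 'M[R]_(m, d) -> R) (A B : R) :
  0 <= A -> 0 <= B ->
  (forall D E, phi E - phi D <= A * norm12 (E - D) + B * norm12 (E - D) ^+ 2) ->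
  forall D D', phi D' - phi D <= A * norm12 (D' - D).
Proof.
move=> A0 B0 H D D'.
set del := norm12 (D' - D).
have del0 : 0 <= del by exact: norm12_ge0.
apply/ler_addgt0Pr => e e0.
set k := (Num.Def.archi_bound (B * del ^+ 2 / e)).+1.
have hk : B * del ^+ 2 / e < k%:R.
  apply: lt_le_trans (archi_boundP _) _; first by rewrite divr_ge0 ?mulr_ge0 ?sqr_ge0 // ltW.
  by rewrite ler_nat.
have k0 : 0 < k%:R :> R by rewrite ltr0n.
pose P (j : nat) := D + (j%:R / k%:R) *: (D' - D).
have tel : phi D' - phi D = \sum_(0 <= j < k) (phi (P j.+1) - phi (P j)).
  rewrite telescope_sumr // /P mul0r scale0r addr0 mulfV ?gt_eqF // scale1r. by rewrite [D + _]addrC subrK.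
have step : forall j, phi (P j.+1) - phi (P j) <=
    A * (del / k%:R) + B * (del / k%:R) ^+ 2.
  move=> j.
  have heq : P j.+1 - P j = k%:R^-1 *: (D' - D).
    apply/matrixP => i l; rewrite !mxE -natr1; field; exact: lt0r_neq0.
  have hN : norm12 (P j.+1 - P j) <= del / k%:R.
    by rewrite heq mulrC; apply: norm12Z; rewrite invr_ge0 ltW.
  have N0 := norm12_ge0 (P j.+1 - P j).
  apply: le_trans (H _ _) _; apply: lerD; first by rewrite ler_wpM2l.
  rewrite ler_wpM2l // (@ler_pXn2r _ 2) // nnegrE //.
  by rewrite divr_ge0 // ltW.
rewrite tel.
apply: le_trans (ler_sum _ (fun j _ => step j)) _.
rewrite sumr_const_nat subn0 -[X in X <= _]mulr_natr.
have -> : (A * (del / k%:R) + B * (del / k%:R) ^+ 2) * k%:R =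
    A * del + B * del ^+ 2 / k%:R by field; exact: lt0r_neq0.
have : B * del ^+ 2 / k%:R <= e.
  rewrite ler_pdivrMr //; rewrite ltr_pdivrMr // in hk.
  by rewrite [e * _]mulrC le_eqVlt hk orbT.
lra.
Qed.

Section Main.
Variable R : realType.

Lemma FXE m d n (p q lam : R) (X : 'M[R]_(m, n)) (D : 'M[R]_(m, d)) :
  FX p q lam X D = n%:R^-1 * \sum_(i < n) fcol p q lam (col i X) D.
Proof. by []. Qed.

Lemma LXE m d n (p q lam : R) (X : 'M[R]_(m, n)) :
  LX d p q lam X = n%:R^-1 * \sum_(i < n) AA d p q lam (col i X).
Proof. by []. Qed.

End Main.

Unset Implicit Arguments.
Theorem lemma1 (R : realType) (m d n : nat) (p q lam : R)
  (hm : (1 <= m)%N) (hd : (1 <= d)%N) (hn : (1 <= n)%N)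
  (hp : 0 < p) (hq : 0 < q) (hlam : 0 < lam)
  (X : 'M[R]_(m, n)) (D D' : 'M[R]_(m, d)) :
  unit_cols D -> unit_cols D' ->
  `|FX p q lam X D' - FX p q lam X D| <= LX d p q lam X * norm12 (D' - D).
Proof.
move=> _ _.
have n0 : 0 <= n%:R^-1 :> R by rewrite invr_ge0.
set Bt := n%:R^-1 * \sum_(i < n) 2^-1 * cc d p q lam (col i X) ^+ 2.
have L0 : 0 <= LX d p q lam X.
  by rewrite LXE mulr_ge0 // sumr_ge0 // => i _; exact: AA_ge0.
have B0 : 0 <= Bt.
  rewrite /Bt mulr_ge0 // sumr_ge0 // => i _.
  by rewrite mulr_ge0 ?sqr_ge0 // invr_ge0.
have H : forall D E : 'M[R]_(m, d), FX p q lam X E - FX p q lam X D <=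
    LX d p q lam X * norm12 (E - D) + Bt * norm12 (E - D) ^+ 2.
  move=> D0 E0; rewrite !FXE LXE -mulrBr -sumrB.
  apply: (@le_trans _ _ (n%:R^-1 * \sum_(i < n)
     (AA d p q lam (col i X) * norm12 (E0 - D0) +
      2^-1 * cc d p q lam (col i X) ^+ 2 * norm12 (E0 - D0) ^+ 2))).
    apply: ler_wpM2l => //; apply: ler_sum => i _.
    exact: (fcol_quad hd hp hq hlam).
  rewrite big_split /= -!mulr_suml /Bt.
  by rewrite le_eqVlt; apply/orP; left; apply/eqP; ring.
have up := lipq L0 B0 H D D'.
have lo := lipq L0 B0 H D' D.
rewrite -[D - D']opprB norm12N in lo.
rewrite ler_norml; apply/andP; split; lra.
Qed.
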